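(* For a finite set $A \subset \mathbb{R}$ define the set of popular differences \[ P = \left\{ x \in A-A : \delta_A(x) \geq \frac{1}{11}\frac{|A|^2}{|A-A|} \right\}. \] Then \[ |A|^6 \ll E_3(A) \cdot \sum_{x\in P} \delta_P(x). \]
   Context: For finite $X, Y\subset\mathbb{R}$, $\delta_{X,Y}(x) = \#\{(u,v)\in X\times Y : x = u - v\}$ and $\delta_X = \delta_{X,X}$. $E_3(A) = \sum_{x} \delta_A(x)^3$. The notation $F \ll G$ means $F = O(G)$ as $|A| \to \infty$, i.e. $F \le C G$ for an absolute constant $C$ (for all sufficiently large $|A|$). *)

(* Defs.v *)
From HB Require Import structures.
From mathcomp Require Import all_boot all_order all_algebra.
From mathcomp Require Import finmap.
From mathcomp Require Import Rstruct.
From Stdlib Require Rdefinitions.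
Notation R := Rdefinitions.R (only parsing).
Set Implicit Arguments. Unset Strict Implicit. Unset Printing Implicit Defensive.
Import Order.TTheory GRing.Theory Num.Theory.
Local Open Scope ring_scope.
Local Open Scope fset_scope.

Definition delta (X Y : {fset R}) (x : R) : nat :=
  (\sum_(u <- X) \sum_(v <- Y) (x == (u - v)%R))%N.

Definition deltaA (X : {fset R}) (x : R) : nat := delta X X x.

Definition diffset (A : {fset R}) : {fset R} := [fset u - v | u in A, v in A].

(* E_3(A) = sum_x delta_A(x)^3 (delta_A vanishes outside A - A) *)
Definition E3 (A : {fset R}) : nat :=
  (\sum_(x <- diffset A) expn (deltaA A x) 3)%N.

Definition popular (A : {fset R}) : {fset R} :=
  [fset x in diffset A |
     (1 / 11) * ((#|` A|%:R : R) ^+ 2 / (#|` diffset A|%:R : R))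
       <= (deltaA A x)%:R].

(* Main.v *)
Require Import Defs.
From HB Require Import structures.
From mathcomp Require Import all_boot all_order all_algebra.
From mathcomp Require Import finmap.
From mathcomp Require Import Rstruct.
From Stdlib Require Rdefinitions.
From mathcomp Require Import zify ring lra.
Import Order.TTheory GRing.Theory Num.Theory.
Local Open Scope fset_scope.

Lemma sumb_count {T : Type} (r : seq T) (a : pred T) :
  (\sum_(i <- r) (a i : nat))%N = count a r.
Proof. elim: r => [|x r IH]; by rewrite ?big_nil ?big_cons ?IH. Qed.

Lemma leq_sum_mem (T : eqType) (r : seq T) (F : T -> nat) x :
  x \in r -> F x <= \sum_(i <- r) F i.
Proof.
elim: r => [//|y r IH]; rewrite in_cons big_cons => /orP [/eqP->|/IH H].
  exact: leq_addr.
by apply: (leq_trans H); rewrite leq_addl.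
Qed.

Lemma sum_eq1 {T : eqType} {r : seq T} {x : T} :
  uniq r -> x \in r -> (\sum_(t <- r) (t == x) = 1)%N.
Proof. by move=> u m; rewrite (sumb_count r (pred1 x)) count_uniq_mem // m. Qed.

Lemma sum_eq1r {T : eqType} {r : seq T} {x : T} :
  uniq r -> x \in r -> (\sum_(t <- r) (x == t) = 1)%N.
Proof. move=> u m; rewrite -(sum_eq1 u m); apply: eq_bigr => t _; by rewrite eq_sym. Qed.

Lemma sum_const_nat (T : Type) (r : seq T) k :
  (\sum_(i <- r) k = size r * k)%N.
Proof. by rewrite big_const_seq count_predT iter_addn_0 mulnC. Qed.

Lemma sum_prod (T : Type) (r1 r2 : seq T) (f g : T -> nat) :
  (\sum_(a <- r1) \sum_(b <- r2) f a * g b = (\sum_(a <- r1) f a) * (\sum_(b <- r2) g b))%N.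
Proof. rewrite big_distrl /=; apply: eq_bigr => a _; by rewrite big_distrr. Qed.

Lemma cs_nat (T : Type) (r : seq T) (c : T -> nat) :
  ((\sum_(y <- r) c y) ^ 2 <= size r * \sum_(y <- r) (c y) ^ 2)%N.
Proof.
rewrite -(leq_pmul2l (isT : 0 < 2)).
have -> : ((\sum_(y <- r) c y) ^ 2 = \sum_(i <- r) \sum_(j <- r) c i * c j)%N.
  by rewrite sum_prod expnS expn1.
have -> : (2 * (size r * \sum_(y <- r) c y ^ 2) =
   \sum_(i <- r) \sum_(j <- r) (c i ^ 2 + c j ^ 2))%N.
  under [RHS]eq_bigr do rewrite big_split /= sum_const_nat.
  by rewrite big_split /= sum_const_nat -big_distrr /= mulnC muln2 -addnn.
rewrite big_distrr /=. apply: leq_sum => i _.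
rewrite big_distrr /=; apply: leq_sum => j _.
move: (c i) (c j) => a b; have := nat_AGM2 a b => -[H _]; move: H; rewrite sqrnD; lia.
Qed.

Lemma cs_seq (T Y : eqType) (X : seq T) (phi : T -> Y) :
  ((size X) ^ 2 <= size (undup (map phi X)) *
     \sum_(s <- X) \sum_(s' <- X) (phi s == phi s'))%N.
Proof.
set Z := undup (map phi X).
have uZ : uniq Z by apply: undup_uniq.
have mZ : forall s, s \in X -> phi s \in Z.
  by move=> s sX; rewrite mem_undup map_f.
have E1 : size X = (\sum_(y <- Z) \sum_(s <- X) (phi s == y))%N.
  rewrite exchange_big /= -sum1_size big_seq [in RHS]big_seq.
  by apply: eq_bigr => s sX; rewrite (sum_eq1r uZ (mZ s sX)).
have E2 : (\sum_(s <- X) \sum_(s' <- X) (phi s == phi s') =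
   \sum_(y <- Z) (\sum_(s <- X) (phi s == y)) ^ 2)%N.
  symmetry; under eq_bigr do rewrite expnS expn1 -sum_prod.
  rewrite exchange_big /=; apply: eq_big_seq => s sX.
  rewrite exchange_big /=; apply: eq_bigr => s' _.
  have -> : (\sum_(i <- Z) (phi s == i) * (phi s' == i) =
             \sum_(i <- Z) (phi s' == phi s) * (phi s == i))%N.
    apply: eq_bigr => i _; case: (phi s =P i) => [<-|_]; by rewrite ?eqxx ?muln1 ?mul1n ?muln0 ?mul0n.
  by rewrite -big_distrr /= sum_eq1r ?muln1 ?mZ // eq_sym.
rewrite E1 E2; exact: cs_nat.
Qed.
Lemma mem_diff (A : {fset R}) a b : a \in A -> b \in A -> (a - b)%R \in diffset A.
Proof. move=> aA bA. rewrite /diffset. by apply: in_imfset2. Qed.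

Lemma mem_pop (A : {fset R}) x : (x \in popular A) =
  (x \in diffset A) && ((1 / 11) * ((#|` A|%:R : R) ^+ 2 / (#|` diffset A|%:R : R))
       <= (deltaA A x)%:R)%R.
Proof. by rewrite /popular !inE. Qed.



Lemma leq_sum_in (T : eqType) (r : seq T) (F G : T -> nat) :
  (forall i, i \in r -> F i <= G i)%N -> (\sum_(i <- r) F i <= \sum_(i <- r) G i)%N.
Proof. move=> H; rewrite big_seq [X in (_ <= X)%N]big_seq; exact: leq_sum. Qed.

Definition X3 (A : {fset R}) : seq ((R * R) * R) :=
  [seq (p, c) | p <- [seq (a, b) | a <- (A : seq R), b <- (A : seq R)], c <- (A : seq R)].

Lemma sumX (A : {fset R}) (F : (R * R) * R -> nat) :
  (\sum_(s <- X3 A) F s = \sum_(a <- A) \sum_(b <- A) \sum_(c <- A) F ((a, b), c))%N.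
Proof. by rewrite /X3 big_allpairs big_allpairs. Qed.

Lemma memX (A : {fset R}) s : s \in X3 A -> [/\ s.1.1 \in A, s.1.2 \in A & s.2 \in A].
Proof.
case/allpairsP => [[p c] [/= /allpairsP [[a b] [/= aA bA ->]] cA ->]].
by split.
Qed.

Lemma sizeX (A : {fset R}) : size (X3 A) = (#|` A| ^ 3)%N.
Proof. by rewrite /X3 !size_allpairs !expnS expn0 muln1 mulnA. Qed.

Lemma prod3 (A : {fset R}) (h1 h2 h3 : R -> nat) :
  (\sum_(s <- X3 A) h1 s.1.1 * h2 s.1.2 * h3 s.2 =
   (\sum_(a <- A) h1 a) * (\sum_(b <- A) h2 b) * (\sum_(c <- A) h3 c))%N.
Proof.
rewrite sumX /= -sum_prod big_distrl /=; apply: eq_bigr => a _.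
rewrite big_distrl /=; apply: eq_bigr => b _.
by rewrite big_distrr.
Qed.

Lemma sum_filter_le (T : Type) (Q : pred T) (r : seq T) (F : T -> nat) :
  (\sum_(i <- filter Q r) F i <= \sum_(i <- r) F i)%N.
Proof. rewrite big_filter big_mkcond; apply: leq_sum => i _; by case: (Q i). Qed.

Section Main.
Local Open Scope ring_scope.

Definition thr (A : {fset R}) : R :=
  (1 / 11) * ((#|` A|%:R : R) ^+ 2 / (#|` diffset A|%:R : R)).

Definition Bad (A : {fset R}) : nat :=
  (\sum_(a <- A) \sum_(b <- A) ((a - b)%R \notin popular A))%N.

Lemma Bad_eq A : Bad A = (\sum_(x <- diffset A) (x \notin popular A) * deltaA A x)%N.
Proof.
rewrite /Bad.
transitivity (\sum_(a <- A) \sum_(b <- A) \sum_(x <- diffset A)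
                 (x == (a - b)%R) * (x \notin popular A))%N.
  apply: eq_big_seq => a aA; apply: eq_big_seq => b bA.
  have -> : (\sum_(x <- diffset A) (x == (a - b)%R) * (x \notin popular A) =
             \sum_(x <- diffset A) ((a - b)%R \notin popular A) * (x == (a - b)%R))%N.
    apply: eq_bigr => x _; case: (x =P (a - b)%R) => [->|_]; by rewrite ?muln1 ?mul1n ?muln0 ?mul0n.
  by rewrite -big_distrr /= sum_eq1 ?fset_uniq ?mem_diff // muln1.
under eq_bigr do rewrite exchange_big /=.
rewrite exchange_big /=; apply: eq_bigr => x _.
rewrite /deltaA /delta mulnC big_distrl /=; apply: eq_bigr => a _.
by rewrite big_distrl /=.
Qed.

Lemma Bad_le A : (11 * Bad A <= #|` A| ^ 2)%N.
Proof.
have [D0|Dn0] := eqVneq (#|` diffset A|) 0%N.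
  rewrite Bad_eq; move/size0nil: D0 => ->; by rewrite big_nil.
rewrite -(ler_nat R) natrM Bad_eq natr_sum.
have th0 : 0 <= thr A.
  by rewrite /thr; apply: mulr_ge0; [apply: divr_ge0 | apply: divr_ge0];
     rewrite ?ler01 ?ler0n ?exprn_ge0 ?ler0n.
apply: (le_trans (y := 11%:R * \sum_(x <- diffset A) thr A)).
  apply: ler_wpM2l; first by rewrite ler0n.
  rewrite big_seq [X in _ <= X]big_seq; apply: ler_sum => x xD.
  case hx: (x \in popular A); first by rewrite mul0n.
  move: hx; rewrite mem_pop xD /= => /negbT; rewrite -ltNge => /ltW.
  by rewrite mul1n.
rewrite big_const_seq count_predT iter_addr_0 -(mulr_natr _ (#|` diffset A|)) natrX /thr.
have : (#|` diffset A|%:R : R) != 0 by rewrite pnatr_eq0.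
move=> H; rewrite le_eqVlt; apply/orP; left; apply/eqP; by field.
Qed.

End Main.

Section Main2.
Local Open Scope ring_scope.

Definition Qp (A : {fset R}) (s : (R * R) * R) : bool :=
  [&& s.1.1 - s.1.2 \in popular A, s.1.2 - s.2 \in popular A & s.1.1 - s.2 \in popular A].

Definition phi (s : (R * R) * R) : R * R := (s.1.1 - s.1.2, s.1.2 - s.2).

Lemma partA (A : {fset R}) : (8 * #|` A| ^ 3 <= 11 * size (filter (Qp A) (X3 A)))%N.
Proof.
set n := #|` A|; set P := popular A.
have H1 : (n ^ 3 <= size (filter (Qp A) (X3 A)) + 3 * (n * Bad A))%N.
  rewrite size_filter -sumb_count -sizeX -sum1_size.
  have S1 : (\sum_(s <- X3 A) ((s.1.1 - s.1.2)%R \notin P) = n * Bad A)%N.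
    rewrite sumX /Bad big_distrr /=; apply: eq_bigr => a _.
    rewrite big_distrr /=; apply: eq_bigr => b _; by rewrite sum_const_nat.
  have S2 : (\sum_(s <- X3 A) ((s.1.2 - s.2)%R \notin P) = n * Bad A)%N.
    by rewrite sumX /= sum_const_nat.
  have S3 : (\sum_(s <- X3 A) ((s.1.1 - s.2)%R \notin P) = n * Bad A)%N.
    rewrite sumX /Bad big_distrr /=; apply: eq_bigr => a _.
    by rewrite sum_const_nat.
  apply: (leq_trans (n := (\sum_(s <- X3 A) (Qp A s + ((s.1.1 - s.1.2)%R \notin P)
      + ((s.1.2 - s.2)%R \notin P) + ((s.1.1 - s.2)%R \notin P)))%N)).
    apply: leq_sum => s _; rewrite /Qp.
    by case: (s.1.1 - s.1.2 \in popular A); case: (s.1.2 - s.2 \in popular A);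
       case: (s.1.1 - s.2 \in popular A).
  rewrite !big_split /= S1 S2 S3; lia.
have H2 : (11 * (n * Bad A) <= n ^ 3)%N.
  rewrite mulnA (mulnC 11) -mulnA expnS; apply: leq_mul => //; exact: Bad_le.
lia.
Qed.

Lemma memZ (A : {fset R}) z : z \in undup (map phi (filter (Qp A) (X3 A))) ->
  [/\ z.1 \in popular A, z.2 \in popular A & z.1 + z.2 \in popular A].
Proof.
rewrite mem_undup => /mapP [s]; rewrite mem_filter => /andP [/and3P [h1 h2 h3] _] ->.
rewrite /phi /=; split => //.
by have -> : s.1.1 - s.1.2 + (s.1.2 - s.2) = s.1.1 - s.2 by ring.
Qed.

Lemma partB (A : {fset R}) : (size (undup (map phi (filter (Qp A) (X3 A)))) <=
   \sum_(x <- popular A) deltaA (popular A) x)%N.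
Proof.
set Z := undup _; set P := popular A.
set W := [seq (x, q) | x <- (P : seq R), q <- (P : seq R)].
apply: (leq_trans (n := size (filter (mem Z) W))).
  apply: uniq_leq_size; first exact: undup_uniq.
  move=> z zZ; rewrite mem_filter; apply/andP; split; first exact: zZ.
  case: (memZ A z zZ) => h1 h2 _; case: z {zZ} h1 h2 => x q /= h1 h2.
  exact: (allpairs_f pair h1 h2).
rewrite size_filter -sumb_count big_allpairs /=.
apply: leq_sum => x _; rewrite /deltaA /delta exchange_big /=.
apply: leq_sum => q _.
case hz: ((x, q) \in Z) => //.
case: (memZ A (x, q) hz) => /= _ _ h3.
eapply leq_trans; last exact: ((leq_sum_mem _ _ (fun p => (x == (p - q)%R) : nat) _ h3)).
by rewrite /= addrK eqxx.
Qed.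

Lemma partC (A : {fset R}) :
  (\sum_(s <- filter (Qp A) (X3 A)) \sum_(s' <- filter (Qp A) (X3 A)) (phi s == phi s')
    <= E3 A)%N.
Proof.
apply: (leq_trans (n := (\sum_(s <- filter (Qp A) (X3 A)) \sum_(s' <- X3 A) (phi s == phi s'))%N)).
  by apply: leq_sum => s _; apply: sum_filter_le.
apply: (leq_trans (sum_filter_le _ _ _ _)).
apply: (leq_trans (n := (\sum_(s <- X3 A) \sum_(s' <- X3 A) \sum_(t <- diffset A)
   (t == (s.1.1 - s'.1.1)%R) * (t == (s.1.2 - s'.1.2)%R) * (t == (s.2 - s'.2)%R))%N)).
  apply: leq_sum_in => s sX; apply: leq_sum_in => s' s'X.
  case: (memX A s sX) => a1 _ _; case: (memX A s' s'X) => a2 _ _.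
  case: eqP => // /pair_equal_spec [e1 e2].
  have H := leq_sum_mem _ _ (fun t => (t == (s.1.1 - s'.1.1)%R) * (t == (s.1.2 - s'.1.2)%R) * (t == (s.2 - s'.2)%R))%N _ (mem_diff _ _ _ a1 a2).
  eapply leq_trans; last exact: H.
  have -> : s.1.2 - s'.1.2 = s.1.1 - s'.1.1 by lra.
  have -> : s.2 - s'.2 = s.1.1 - s'.1.1 by lra.
  by rewrite /= eqxx.
under eq_bigr do rewrite exchange_big /=.
rewrite exchange_big /= /E3 leq_eqVlt; apply/orP; left; apply/eqP.
apply: eq_bigr => t _.
under eq_bigr => s _ do rewrite (prod3 A (fun v => (t == (s.1.1 - v)%R) : nat)
   (fun v => (t == (s.1.2 - v)%R) : nat) (fun v => (t == (s.2 - v)%R) : nat)).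
rewrite (prod3 A (fun u => \sum_(v <- A) (t == (u - v)%R) : nat)
   (fun u => \sum_(v <- A) (t == (u - v)%R) : nat) (fun u => \sum_(v <- A) (t == (u - v)%R) : nat)).
by rewrite /deltaA /delta !expnS expn0 muln1 mulnA.
Qed.

End Main2.

Local Open Scope ring_scope.
Local Open Scope fset_scope.

Theorem lemma1p6 :
  exists C : R, 0 < C /\
  exists N : nat, forall A : {fset R}, (N <= #|` A|)%N ->
    (#|` A|%:R : R) ^+ 6 <=
      C * (E3 A)%:R * (\sum_(x <- popular A) deltaA (popular A) x)%N%:R.
Proof.
exists 2%:R; split; first by rewrite ltr0n.
exists 0%N => A _.
set S := (\sum_(x <- popular A) deltaA (popular A) x)%N.
set n := #|` A|.
set Y := filter (Qp A) (X3 A).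
have hcs := cs_seq _ _ Y phi.
have hA := partA A.
have hB := partB A.
have hC := partC A.
have h1 : (size Y ^ 2 <= S * E3 A)%N.
  apply: (leq_trans hcs); exact: leq_mul.
have h2 : ((8 * n ^ 3) ^ 2 <= (11 * size Y) ^ 2)%N by rewrite leq_sqr.
have h3 : (n ^ 6 <= 2 * E3 A * S)%N.
  have e6 : (n ^ 6 = (n ^ 3) ^ 2)%N by rewrite -expnM.
  rewrite e6; move: h2 h1; move: (n ^ 3)%N (size Y) => m y.
  rewrite !expnMn; lia.
rewrite -natrX -!natrM ler_nat; exact: h3.
Qed.
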